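(* Let $f,g\in\mathbb{C}[X]$ with $\deg f=n\ge 1$ and $g\mid f$, $g\neq 0$. Then $\Phi(g):=f g'/g=\sum_{i=0}^{n-1}a_iX^i\in\mathbb{C}[X]$ and for every $0\le i\le n-1$, $$|a_i|\le B_i:=\binom{n-1}{i}\,n\,M(f).$$
   Context: For $h\in\mathbb{C}[X]$ with leading coefficient $\ell_h$, the Mahler measure is $M(h)=|\ell_h|\prod_{|\alpha|>1}|\alpha|^{m_\alpha}$, the product over the complex roots $\alpha$ of $h$ with $|\alpha|>1$, $m_\alpha$ the multiplicity of $\alpha$. *)

(* Defs.v *)
From mathcomp Require Import all_boot all_order all_algebra.
Set Implicit Arguments. Unset Strict Implicit. Unset Printing Implicit Defensive.
Import Order.TTheory GRing.Theory Num.Theory.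
Local Open Scope ring_scope.

(* Complex numbers are modelled by an arbitrary numClosedFieldType C
   (algebraically closed field with a norm, e.g. the complex numbers). *)

Definition roots_seq (C : numClosedFieldType) (p : {poly C}) : seq C :=
  sval (closed_field_poly_normal p).

Lemma roots_seqP (C : numClosedFieldType) (p : {poly C}) :
  p = lead_coef p *: \prod_(z <- roots_seq p) ('X - z%:P).
Proof. exact: (svalP (closed_field_poly_normal p)). Qed.

Definition mahler (C : numClosedFieldType) (p : {poly C}) : C :=
  `|lead_coef p| * \prod_(z <- roots_seq p | 1 < `|z|) `|z|.

(* Main.v *)
Require Import Defs.
From mathcomp Require Import all_boot all_order all_algebra.
Import Order.TTheory GRing.Theory Num.Theory.
Local Open Scope ring_scope.

Section Aux.
Variable C : numClosedFieldType.

Definition mx (z : C) : C := if 1 < `|z| then `|z| else 1.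

Lemma mx_ge1 z : 1 <= mx z.
Proof. by rewrite /mx; case: ifP => // /ltW. Qed.

Lemma mx_ge0 z : 0 <= mx z.
Proof. exact: le_trans ler01 (mx_ge1 z). Qed.

Lemma mx_norm z : `|z| <= mx z.
Proof.
rewrite /mx; case: ifP => // /negbT.
by rewrite -real_leNgt ?realE ?normr_ge0 ?ler01.
Qed.

Lemma prod_mx_ge0 (s : seq C) : 0 <= \prod_(z <- s) mx z.
Proof. by apply: prodr_ge0 => z _; apply: mx_ge0. Qed.

Lemma coef_prod_bound (s : seq C) i :
  `|(\prod_(z <- s) ('X - z%:P))`_i| <= ('C(size s, i))%:R * \prod_(z <- s) mx z.
Proof.
elim: s i => [|a s IH] i.
  rewrite !big_nil coef1 mulr1; case: i => [|i] //=; rewrite ?normr1 ?normr0 //.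
rewrite !big_cons /= mulrBl coefB coefXM coefCM.
have ha := mx_norm a; have h1 := mx_ge1 a; have h0 := prod_mx_ge0 s.
set P := \prod_(z <- s) ('X - z%:P); set M := \prod_(z <- s) mx z.
have hM : 0 <= M by [].
have key j : `|a * P`_j| <= mx a * ('C(size s, j)%:R * M).
  by rewrite normrM; apply: ler_pM => //; exact: IH.
case: i => [|k] /=.
  rewrite sub0r normrN; apply: le_trans (key 0%N) _; by rewrite !bin0 !mul1r.
rewrite binS natrD mulrDl.
apply: (le_trans (ler_normB _ _)); rewrite [X in _ <= X]addrC.
apply: lerD; last by rewrite mulrCA.
rewrite mulrCA; apply: le_trans (IH k) _; apply: ler_peMl => //.
by rewrite mulr_ge0 // ler0n.
Qed.
Lemma deriv_prodX (s : seq C) :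
  (\prod_(z <- s) ('X - z%:P))^`() = \sum_(x <- s) \prod_(z <- rem x s) ('X - z%:P).
Proof.
elim: s => [|a s IH]; first by rewrite !big_nil derivC.
rewrite big_cons derivM derivXsubC mul1r IH mulr_sumr big_cons /= eqxx.
congr (_ + _); rewrite !big_seq; apply: eq_bigr => x xs /=.
case: eqP => [->|_]; last by rewrite big_cons.
by rewrite (perm_big _ (perm_to_rem xs)) big_cons.
Qed.

Definition Mm (s : seq C) := \prod_(z <- s) mx z.

Lemma Mm_rem (s : seq C) x : Mm (rem x s) <= Mm s.
Proof.
rewrite /Mm; case: (boolP (x \in s)) => xs; last by rewrite rem_id.
rewrite [X in _ <= X](perm_big _ (perm_to_rem xs)) big_cons.
by apply: ler_peMl; [apply: prod_mx_ge0 | apply: mx_ge1].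
Qed.

Lemma Mm_mahler (p : {poly C}) : mahler p = `|lead_coef p| * Mm (roots_seq p).
Proof.
rewrite /mahler /Mm; congr (_ * _).
by rewrite big_mkcond /=; apply: eq_bigr => z _; rewrite /mx.
Qed.
Lemma sum_const_seq (s : seq C) (K : C) : \sum_(x <- s) K = K *+ size s.
Proof. by elim: s => [|a s IH]; rewrite ?big_nil ?big_cons ?IH ?mulrS. Qed.
End Aux.
Arguments Mm {C} s.

Theorem lemma4p1 (C : numClosedFieldType) (f g : {poly C}) (n : nat) :
  size f = n.+1 -> (1 <= n)%N -> g != 0 -> g %| f ->
  let Phi := (f * g^`()) %/ g in
  [/\ Phi * g = f * g^`(),
      (size Phi <= n)%N &
      forall i : nat, (i < n)%N ->
        `|Phi`_i| <= ('C(n.-1, i) * n)%:R * mahler f].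
Proof.
move=> sf n1 g0 gf Phi.
have fgh : f = (f %/ g) * g by rewrite divpK.
have PhiE : Phi = (f %/ g) * g^`().
  by rewrite /Phi {1}fgh -mulrA (mulrC g) mulrA mulpK.
have PhiG : Phi * g = f * g^`().
  by rewrite PhiE {2}fgh -!mulrA (mulrC g).
move: PhiE; move: (f %/ g) fgh => h fgh PhiE.
have Eg := roots_seqP g; have Eh := roots_seqP h; have Ef := roots_seqP f.
rewrite Mm_mahler.
move: Eg Eh Ef; set sg := roots_seq g; set sh := roots_seq h; set r := roots_seq f.
set cg := lead_coef g; set ch := lead_coef h; set c := lead_coef f => Eg Eh Ef.
have hL : f = (ch * cg) *: \prod_(z <- sh ++ sg) ('X - z%:P).
  by rewrite fgh {1}Eh {1}Eg -scalerAl -scalerAr scalerA big_cat.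
have cE : c = ch * cg.
  by rewrite /c {1}hL lead_coefZ lead_coef_prod_XsubC mulr1.
have f0 : f != 0 by rewrite -size_poly_eq0 sf.
have c0 : c != 0 by rewrite lead_coef_eq0.
have pr : perm_eq r (sh ++ sg).
  apply: prod_XsubC_eq; apply: (scalerI c0).
  by rewrite -Ef {1}hL cE.
have sr : size r = n.
  by move: sf; rewrite Ef size_scale // size_prod_XsubC => -[].
have PhiS : Phi = c *: \sum_(x <- sg) \prod_(z <- sh ++ rem x sg) ('X - z%:P).
  rewrite PhiE {1}Eh {1}Eg derivZ deriv_prodX -scalerAl -scalerAr scalerA -cE.
  by congr (_ *: _); rewrite big_distrr /=; apply: eq_bigr => x _; rewrite big_cat.
have bnd : forall i, `|Phi`_i| <= ('C(n.-1, i) * n)%:R * (`|c| * Mm r).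
  move=> i; rewrite PhiS coefZ normrM coef_sum.
  rewrite mulrCA; apply: ler_wpM2l; first exact: normr_ge0.
  apply: le_trans (ler_norm_sum _ _ _) _.
  apply: (@le_trans _ _ (\sum_(x <- sg) ('C(n.-1, i)%:R * Mm r))).
    rewrite big_seq [X in _ <= X]big_seq; apply: ler_sum => x xs.
    apply: le_trans (coef_prod_bound _ _ _) _.
    have sg0 : (0 < size sg)%N by move: xs; case: (sg).
    have szE : size (sh ++ rem x sg) = n.-1.
      rewrite size_cat size_rem // -sr (perm_size pr) size_cat.
      by rewrite -(prednK sg0) /= addnS.
    rewrite szE; apply: ler_wpM2l; first exact: ler0n.
    rewrite /Mm (perm_big _ pr) !big_cat; apply: ler_wpM2l; first exact: prod_mx_ge0.
    exact: Mm_rem.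
  rewrite sum_const_seq natrM -[_ *+ size sg]mulr_natr [X in _ <= X]mulrAC.
  apply: ler_wpM2l.
    by rewrite mulr_ge0 ?ler0n //; apply: prod_mx_ge0.
  by rewrite ler_nat -sr (perm_size pr) size_cat leq_addl.
split; first exact: PhiG.
  apply/leq_sizeP => j nj; apply/eqP; rewrite -normr_eq0 eq_le normr_ge0 andbT.
  apply: le_trans (bnd j) _; rewrite bin_small ?mul0n ?mul0r //.
  by rewrite prednK.

by move=> i _; apply: bnd.
Qed.
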